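(* Fix $k\in\{1,\dots,K\}$ and arbitrary matrices $\mathbf{V}_1^{(i)},\dots,\mathbf{V}_G^{(i)}\in\mathbb{C}^{M\times d}$, and let $h_k^{(i)}$ be defined as in the context. Then: (C.a) For all $\mathbf{V}_1,\dots,\mathbf{V}_G\in\mathbb{C}^{M\times d}$, $$h_k^{(i)}(\{\mathbf{V}_g\})\ \ge\ -\log\det\big(\mathbf{I}_N+\mathbf{H}_k\mathbf{V}_{g_k}\mathbf{V}_{g_k}^H\mathbf{H}_k^H\mathbf{J}_k\big),$$ with equality when $\mathbf{V}_g=\mathbf{V}_g^{(i)}$ for all $g=1,\dots,G$. (C.b) At $\{\mathbf{V}_g\}=\{\mathbf{V}_g^{(i)}\}$, the partial derivatives of $h_k^{(i)}$ and of $\{\mathbf{V}_g\}\mapsto-\log\det\big(\mathbf{I}_N+\mathbf{H}_k\mathbf{V}_{g_k}\mathbf{V}_{g_k}^H\mathbf{H}_k^H\mathbf{J}_k\big)$ with respect to the real part and the imaginary part of every entry of every $\mathbf{V}_g$, $g=1,\dots,G$, coincide. Moreover $h_k^{(i)}$ is a convex quadratic function of $\{\mathbf{V}_g\}$.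
   Context: Setting: there are $G$ clusters and $K$ base stations; BS $k$ belongs to cluster $g_k\in\{1,\dots,G\}$. Integers $M>N\ge1$ are given and $d=N$. For each $k$, $\mathbf{H}_k\in\mathbb{C}^{N\times M}$ is fixed and $\sigma_k^2>0$. Variables $\mathbf{V}_g\in\mathbb{C}^{M\times d}$, $g=1,\dots,G$. Define $$\mathbf{J}_k=\Big(\sum_{g'\neq g_k}\mathbf{H}_k\mathbf{V}_{g'}\mathbf{V}_{g'}^H\mathbf{H}_k^H+\sigma_k^2\mathbf{I}_N\Big)^{-1},$$ $$\hat{\mathbf{U}}_k^{(i)}=\Big(\sum_{g=1}^G\mathbf{H}_k\mathbf{V}_g^{(i)}(\mathbf{V}_g^{(i)})^H\mathbf{H}_k^H+\sigma_k^2\mathbf{I}_N\Big)^{-1}\mathbf{H}_k\mathbf{V}_{g_k}^{(i)},\qquad \hat{\mathbf{Q}}_k^{(i)}=\mathbf{I}_d-(\hat{\mathbf{U}}_k^{(i)})^H\mathbf{H}_k\mathbf{V}_{g_k}^{(i)},$$ $$\hat{\mathbf{A}}_k^{(i)}=\mathbf{H}_k^H\hat{\mathbf{U}}_k^{(i)}(\hat{\mathbf{Q}}_k^{(i)})^{-1}(\hat{\mathbf{U}}_k^{(i)})^H\mathbf{H}_k,\qquad \hat{\mathbf{B}}_k^{(i)}=-(\hat{\mathbf{Q}}_k^{(i)})^{-1}(\hat{\mathbf{U}}_k^{(i)})^H\mathbf{H}_k,$$ $$\hat b_k^{(i)}=\mathrm{Tr}\Big((\hat{\mathbf{Q}}_k^{(i)})^{-1}\big(\mathbf{I}_d+\sigma_k^2(\hat{\mathbf{U}}_k^{(i)})^H\hat{\mathbf{U}}_k^{(i)}\big)\Big)+\log\det\hat{\mathbf{Q}}_k^{(i)}-d,$$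 $$h_k^{(i)}(\{\mathbf{V}_g\})=\sum_{g=1}^G\mathrm{Tr}\big(\mathbf{V}_g^H\hat{\mathbf{A}}_k^{(i)}\mathbf{V}_g\big)+2\,\Re\{\mathrm{Tr}(\hat{\mathbf{B}}_k^{(i)}\mathbf{V}_{g_k})\}+\hat b_k^{(i)}.$$ Here $\log$ is the natural logarithm. *)

(* Defs.v *)
From Stdlib Require Import Reals Lra Psatz.
From Stdlib Require Import Classical ClassicalEpsilon FunctionalExtensionality PropExtensionality.
From HB Require Import structures.
From mathcomp Require Import all_boot all_order all_algebra.

Set Implicit Arguments.
Unset Strict Implicit.
Unset Printing Implicit Defensive.

Import GRing.Theory.

Record cplx := Cplx { cre : R; cim : R }.

Lemma cplx_eqP : Equality.axiom (fun x y : cplx =>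
  if excluded_middle_informative (x = y) then true else false).
Proof.
move=> x y; case: excluded_middle_informative => h; [exact: ReflectT|exact: ReflectF].
Qed.
HB.instance Definition _ := hasDecEq.Build cplx cplx_eqP.

Definition cplx_find (P : pred cplx) (n : nat) : option cplx :=
  match excluded_middle_informative (exists x, P x) with
  | left h => Some (proj1_sig (constructive_indefinite_description _ h))
  | right _ => None
  end.

Lemma cplx_find_correct P n x : cplx_find P n = Some x -> P x.
Proof.
rewrite /cplx_find; case: excluded_middle_informative => // h [<-].
exact: proj2_sig (constructive_indefinite_description _ h).
Qed.

Lemma cplx_find_complete (P : pred cplx) : (exists x, P x) -> exists n, cplx_find P n.
Proof. by move=> h; exists 0%N; rewrite /cplx_find; case: excluded_middle_informative. Qed.

Lemma cplx_find_ext (P Q : pred cplx) : P =1 Q -> cplx_find P =1 cplx_find Q.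
Proof. by move=> /functional_extensionality ->. Qed.

HB.instance Definition _ := hasChoice.Build cplx
  cplx_find_correct cplx_find_complete cplx_find_ext.

Definition czero := Cplx R0 R0.
Definition cone := Cplx R1 R0.
Definition copp (x : cplx) := Cplx (Ropp (cre x)) (Ropp (cim x)).
Definition cadd (x y : cplx) := Cplx (Rplus (cre x) (cre y)) (Rplus (cim x) (cim y)).
Definition cmul (x y : cplx) :=
  Cplx (Rminus (Rmult (cre x) (cre y)) (Rmult (cim x) (cim y)))
       (Rplus (Rmult (cre x) (cim y)) (Rmult (cim x) (cre y))).
Definition cinv (x : cplx) :=
  let n := Rplus (Rmult (cre x) (cre x)) (Rmult (cim x) (cim x)) in
  Cplx (Rdiv (cre x) n) (Rdiv (Ropp (cim x)) n).

Lemma cplx_ext (x y : cplx) : cre x = cre y -> cim x = cim y -> x = y.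
Proof. by case: x; case: y => ? ? ? ? /= -> ->. Qed.

Lemma caddA : associative cadd.
Proof. by move=> x y z; apply: cplx_ext; rewrite /= Rplus_assoc. Qed.
Lemma caddC : commutative cadd.
Proof. by move=> x y; apply: cplx_ext; rewrite /= Rplus_comm. Qed.
Lemma cadd0 : left_id czero cadd.
Proof. by move=> x; apply: cplx_ext; rewrite /= Rplus_0_l. Qed.
Lemma caddN : left_inverse czero copp cadd.
Proof. by move=> x; apply: cplx_ext; rewrite /= Rplus_opp_l. Qed.

HB.instance Definition _ := GRing.isZmodule.Build cplx caddA caddC cadd0 caddN.

Lemma cmulA : associative cmul.
Proof. by move=> x y z; apply: cplx_ext => /=; ring. Qed.
Lemma cmulC : commutative cmul.
Proof. by move=> x y; apply: cplx_ext => /=; ring. Qed.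
Lemma cmul1 : left_id cone cmul.
Proof. by move=> x; apply: cplx_ext => /=; ring. Qed.
Lemma cmulDl : left_distributive cmul cadd.
Proof. by move=> x y z; apply: cplx_ext => /=; ring. Qed.
Lemma cone_neq0 : cone != czero.
Proof.
apply/eqP => h; have := f_equal cre h => /= ; exact: R1_neq_R0.
Qed.

HB.instance Definition _ := GRing.Zmodule_isComNzRing.Build cplx
  cmulA cmulC cmul1 cmulDl cone_neq0.

Lemma cmulVf (x : cplx) : (x != 0)%R -> cmul (cinv x) x = 1%R.
Proof.
move=> /eqP nz.
have hn : Rplus (Rmult (cre x) (cre x)) (Rmult (cim x) (cim x)) <> R0.
  move=> h; apply: nz; apply: cplx_ext => /=; nra.
by apply: cplx_ext => /=; field.
Qed.
Lemma cinv0 : cinv 0%R = 0%R.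
Proof. by apply: cplx_ext; rewrite /= /Rdiv !Rmult_0_l ?Ropp_0 ?Rmult_0_l. Qed.

HB.instance Definition _ := GRing.ComNzRing_isField.Build cplx cmulVf cinv0.

Definition RtoC (r : R) : cplx := Cplx r R0.
Definition iC : cplx := Cplx R0 R1.
Definition conjc (x : cplx) : cplx := Cplx (cre x) (Ropp (cim x)).

Local Open Scope ring_scope.

Definition herm m n (A : 'M[cplx]_(m, n)) : 'M[cplx]_(n, m) := (map_mx conjc A)^T.

Section Model.
Variables (G K N M : nat).
Variable gk : 'I_K -> 'I_G.                       (* cluster of BS k *)
Variable H : 'I_K -> 'M[cplx]_(N, M).
Variable sigma2 : 'I_K -> R.

(* precoders V_g in C^{M x d} with d = N *)
Definition precoders := 'I_G -> 'M[cplx]_(M, N).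

Definition Jmat (k : 'I_K) (V : precoders) : 'M[cplx]_N :=
  invmx (\sum_(g < G | g != gk k) (H k *m V g *m herm (V g) *m herm (H k))
         + (RtoC (sigma2 k))%:M).

Definition Uhat (k : 'I_K) (Vi : precoders) : 'M[cplx]_N :=
  invmx (\sum_(g < G) (H k *m Vi g *m herm (Vi g) *m herm (H k))
         + (RtoC (sigma2 k))%:M) *m H k *m Vi (gk k).

Definition Qhat k Vi : 'M[cplx]_N := 1%:M - herm (Uhat k Vi) *m H k *m Vi (gk k).

Definition Ahat k Vi : 'M[cplx]_M :=
  herm (H k) *m Uhat k Vi *m invmx (Qhat k Vi) *m herm (Uhat k Vi) *m H k.

Definition Bhat k Vi : 'M[cplx]_(N, M) :=
  - (invmx (Qhat k Vi) *m herm (Uhat k Vi) *m H k).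

(* the traces below are real numbers; we take their real parts explicitly,
   and log det of the Hermitian positive definite Q is ln of the real part of det *)
Definition bhat k Vi : R :=
  Rminus (Rplus (cre (\tr (invmx (Qhat k Vi) *m
                     (1%:M + RtoC (sigma2 k) *: (herm (Uhat k Vi) *m Uhat k Vi)))))
                (ln (cre (\det (Qhat k Vi)))))
         (INR N).

Definition hsur (k : 'I_K) (Vi V : precoders) : R :=
  Rplus (Rplus (cre (\sum_(g < G) \tr (herm (V g) *m Ahat k Vi *m V g)))
               (Rmult (Rplus R1 R1) (cre (\tr (Bhat k Vi *m V (gk k))))))
        (bhat k Vi).

(* -log det (I_N + H_k V_{g_k} V_{g_k}^H H_k^H J_k) ; the determinant is a
   positive real number, so log det is ln of its real part *)
Definition negrate (k : 'I_K) (V : precoders) : R :=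
  Ropp (ln (cre (\det (1%:M + H k *m V (gk k) *m herm (V (gk k)) *m herm (H k) *m Jmat k V)))).

End Model.

Definition prec_add G M N (V W : 'I_G -> 'M[cplx]_(M, N)) : 'I_G -> 'M[cplx]_(M, N) :=
  fun g => V g + W g.
Definition prec_scale G M N (t : R) (V : 'I_G -> 'M[cplx]_(M, N)) : 'I_G -> 'M[cplx]_(M, N) :=
  fun g => RtoC t *: V g.

Definition perturb G M N (V : 'I_G -> 'M[cplx]_(M, N)) (g : 'I_G) (a : 'I_M) (b : 'I_N)
  (c : cplx) : 'I_G -> 'M[cplx]_(M, N) :=
  fun g' => if g' == g then V g' + c *: delta_mx a b else V g'.

(* Main.v *)
Require Import Defs.
From Stdlib Require Import Reals Lra Psatz.
From Stdlib Require Import Classical FunctionalExtensionality.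
From HB Require Import structures.
From mathcomp Require Import all_boot all_order all_algebra.
From mathcomp Require Import Rstruct.
Ltac sring := ring. Ltac slra := lra. Ltac snra := nra. Ltac sfield := field.
From mathcomp Require Import ring lra.
Set Implicit Arguments. Unset Strict Implicit. Unset Printing Implicit Defensive.
Import Order.TTheory GRing.Theory Num.Theory.
Local Open Scope ring_scope.

Lemma creD (x y : cplx) : cre (x + y) = cre x + cre y. Proof. by []. Qed.
Lemma cimD (x y : cplx) : cim (x + y) = cim x + cim y. Proof. by []. Qed.
Lemma creN (x : cplx) : cre (- x) = - cre x. Proof. by []. Qed.
Lemma cimN (x : cplx) : cim (- x) = - cim x. Proof. by []. Qed.
Lemma creM (x y : cplx) : cre (x * y) = cre x * cre y - cim x * cim y. Proof. by []. Qed.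
Lemma cimM (x y : cplx) : cim (x * y) = cre x * cim y + cim x * cre y. Proof. by []. Qed.
Lemma cre0 : cre 0 = 0. Proof. by []. Qed.
Lemma cim0 : cim 0 = 0. Proof. by []. Qed.
Lemma cre1 : cre 1 = 1. Proof. by []. Qed.
Lemma cim1 : cim 1 = 0. Proof. by []. Qed.
Lemma cre_zmod : zmod_morphism cre. Proof. by []. Qed.
HB.instance Definition _ := GRing.isZmodMorphism.Build cplx R cre cre_zmod.
Lemma cim_zmod : zmod_morphism cim. Proof. by []. Qed.
HB.instance Definition _ := GRing.isZmodMorphism.Build cplx R cim cim_zmod.
Lemma conjc_zmod : zmod_morphism conjc.
Proof. by move=> x y; apply: cplx_ext => /=; rewrite ?Ropp_plus_distr. Qed.
HB.instance Definition _ := GRing.isZmodMorphism.Build cplx cplx conjc conjc_zmod.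
Lemma conjc_mon : monoid_morphism conjc.
Proof. split; first by apply: cplx_ext => /=; rewrite ?Ropp_0. by move=> x y; apply: cplx_ext => /=; sring. Qed.
HB.instance Definition _ := GRing.isMonoidMorphism.Build cplx cplx conjc conjc_mon.

Lemma cplxE (x y : cplx) : cre x = cre y -> cim x = cim y -> x = y.
Proof. exact: cplx_ext. Qed.
Lemma conjcK (x : cplx) : conjc (conjc x) = x.
Proof. by apply: cplx_ext => //=; rewrite Ropp_involutive. Qed.
Lemma cre_conj x : cre (conjc x) = cre x. Proof. by []. Qed.
Lemma cim_conj x : cim (conjc x) = - cim x. Proof. by []. Qed.
Lemma creR r : cre (RtoC r) = r. Proof. by []. Qed.
Lemma cimR r : cim (RtoC r) = 0. Proof. by []. Qed.
Lemma conjR r : conjc (RtoC r) = RtoC r.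
Proof. by apply: cplx_ext => //=; rewrite Ropp_0. Qed.
Lemma RtoCM r s : RtoC (r * s) = RtoC r * RtoC s.
Proof. apply: cplx_ext => /=; rewrite /GRing.mul/=; sring. Qed.
Lemma creRM r x : cre (RtoC r * x) = r * cre x.
Proof. rewrite creM /= mul0r subr0 //. Qed.
Lemma cimRM r x : cim (RtoC r * x) = r * cim x.
Proof. rewrite cimM /= mul0r addr0 //. Qed.
Lemma R0z : R0 = 0. Proof. by []. Qed.
Lemma R1z : R1 = 1. Proof. by []. Qed.
Ltac rnorm := rewrite ?RealsE ?R0z ?R1z.

Lemma conj_mul_self x : x * conjc x = RtoC (cre x ^+ 2 + cim x ^+ 2).
Proof.
apply: cplx_ext => /=; rnorm; move: (cre x) (cim x) => a b; ring.
Qed.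

Section Herm.
Lemma hermE m n (A : 'M[cplx]_(m, n)) i j : herm A i j = conjc (A j i).
Proof. by rewrite /herm !mxE. Qed.
Lemma hermK m n (A : 'M[cplx]_(m, n)) : herm (herm A) = A.
Proof. by apply/matrixP => i j; rewrite !hermE conjcK. Qed.
Lemma hermM m n p (A : 'M[cplx]_(m, n)) (B : 'M_(n, p)) :
  herm (A *m B) = herm B *m herm A.
Proof. by rewrite /herm map_mxM trmx_mul. Qed.
Lemma hermD m n (A B : 'M[cplx]_(m, n)) : herm (A + B) = herm A + herm B.
Proof. by apply/matrixP => i j; rewrite !(hermE, mxE) rmorphD. Qed.
Lemma hermN m n (A : 'M[cplx]_(m, n)) : herm (- A) = - herm A.
Proof. by apply/matrixP => i j; rewrite !(hermE, mxE) rmorphN. Qed.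
Lemma hermB m n (A B : 'M[cplx]_(m, n)) : herm (A - B) = herm A - herm B.
Proof. by rewrite hermD hermN. Qed.
Lemma herm0 m n : herm (0 : 'M[cplx]_(m, n)) = 0.
Proof. by apply/matrixP => i j; rewrite !(hermE, mxE) rmorph0. Qed.
Lemma hermZ m n c (A : 'M[cplx]_(m, n)) : herm (c *: A) = conjc c *: herm A.
Proof. by apply/matrixP => i j; rewrite !(hermE, mxE) rmorphM. Qed.
Lemma herm_scalar n c : herm (c%:M : 'M[cplx]_n) = (conjc c)%:M.
Proof.
apply/matrixP => i j; rewrite !(hermE, mxE) eq_sym.
by case: (i == j); rewrite /= ?rmorph0 // rmorphMn rmorph1 ?mulr1n.
Qed.
Lemma herm1 n : herm (1%:M : 'M[cplx]_n) = 1%:M.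
Proof. by rewrite herm_scalar rmorph1. Qed.
Lemma hermR n r : herm ((RtoC r)%:M : 'M[cplx]_n) = (RtoC r)%:M.
Proof. by rewrite herm_scalar conjR. Qed.
Lemma herm_sum m n I (r : seq I) (P : pred I) (F : I -> 'M[cplx]_(m, n)) :
  herm (\sum_(i <- r | P i) F i) = \sum_(i <- r | P i) herm (F i).
Proof.
elim/big_rec2: _ => [|i A B _ <-]; first by rewrite herm0.
by rewrite hermD.
Qed.
Lemma herm_inv n (A : 'M[cplx]_n) : herm (invmx A) = invmx (herm A).
Proof. by rewrite /herm map_invmx trmx_inv. Qed.
Lemma tr_herm n (A : 'M[cplx]_n) : \tr (herm A) = conjc (\tr A).
Proof.
rewrite /mxtrace rmorph_sum; apply: eq_bigr => i _; by rewrite hermE.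
Qed.
Lemma det_herm n (A : 'M[cplx]_n) : \det (herm A) = conjc (\det A).
Proof. by rewrite /herm det_tr det_map_mx. Qed.
Lemma herm_delta m n (a : 'I_m) (b : 'I_n) : herm (delta_mx a b) = delta_mx b a.
Proof.
apply/matrixP => i j; rewrite !(hermE, mxE).
by case: (j == a); case: (i == b); rewrite /= ?rmorph0 ?rmorph1.
Qed.
End Herm.

Lemma tr_hermM m n (X : 'M[cplx]_(m, n)) :
  \tr (herm X *m X) = \sum_i \sum_j RtoC (cre (X j i) ^+ 2 + cim (X j i) ^+ 2).
Proof.
rewrite /mxtrace; apply: eq_bigr => i _; rewrite mxE; apply: eq_bigr => j _.
by rewrite hermE mulrC conj_mul_self.
Qed.
Lemma cim_tr_hermM m n (X : 'M[cplx]_(m, n)) : cim (\tr (herm X *m X)) = 0.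
Proof.
rewrite tr_hermM raddf_sum big1 // => i _; rewrite raddf_sum big1 // => j _.
Qed.
Lemma cre_tr_hermM m n (X : 'M[cplx]_(m, n)) :
  cre (\tr (herm X *m X)) = \sum_i \sum_j (cre (X j i) ^+ 2 + cim (X j i) ^+ 2).
Proof.
rewrite tr_hermM raddf_sum; apply: eq_bigr => i _; rewrite raddf_sum.
by apply: eq_bigr => j _.
Qed.
Lemma cre_tr_hermM_ge0 m n (X : 'M[cplx]_(m, n)) : 0 <= cre (\tr (herm X *m X)).
Proof.
rewrite cre_tr_hermM; apply: sumr_ge0 => i _; apply: sumr_ge0 => j _.
by rewrite addr_ge0 // sqr_ge0.
Qed.
Lemma cplx_neq0 (x : cplx) : x != 0 -> 0 < cre x ^+ 2 + cim x ^+ 2.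
Proof.
move=> nz; rewrite lt_def paddr_eq0 ?sqr_ge0 // !sqrf_eq0 addr_ge0 ?sqr_ge0 // andbT.
apply/negP => /andP [/eqP h1 /eqP h2]; move/eqP: nz; apply; exact: cplx_ext.
Qed.
Lemma cre_tr_hermM_gt0 m n (X : 'M[cplx]_(m, n)) : X != 0 -> 0 < cre (\tr (herm X *m X)).
Proof.
move=> nz.
have [j [i hij]] : exists j i, X j i != 0.
  case: (classic (exists j i, X j i != 0)) => // hn; exfalso.
  move/eqP: nz; apply; apply/matrixP => j i; rewrite mxE.
  by apply/eqP; apply: NNPP => h; apply: hn; exists j, i; apply/negP.
rewrite cre_tr_hermM (bigD1 i) //= (bigD1 j) //=.
rewrite -addrA ltr_pwDl ?cplx_neq0 //.
apply: addr_ge0; apply: sumr_ge0 => *; [|apply: sumr_ge0 => *];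
  by rewrite addr_ge0 // sqr_ge0.
Qed.

Lemma ln_le_sub1 (x : R) : 0 < x -> ln x <= x - 1.
Proof.
move=> /RltP hx; have := exp_ineq1_le (ln x); rewrite exp_ln // => /RleP.
rnorm => h; lra.
Qed.
Lemma lnM (x y : R) : 0 < x -> 0 < y -> ln (x * y) = ln x + ln y.
Proof. by move=> /RltP hx /RltP hy; exact: ln_mult. Qed.
Lemma lnV (x : R) : 0 < x -> ln (x^-1) = - ln x.
Proof. by move=> /RltP hx; exact: ln_Rinv. Qed.

Definition qf n (A : 'M[cplx]_n) (x : 'cV[cplx]_n) : R := cre (\tr (herm x *m A *m x)).
Definition hermitian n (A : 'M[cplx]_n) := herm A = A.
Definition pd n (A : 'M[cplx]_n) := hermitian A /\ forall x, x != 0 -> 0 < qf A x.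
Definition psd n (A : 'M[cplx]_n) := hermitian A /\ forall x, 0 <= qf A x.

Lemma qf0 n (A : 'M[cplx]_n) : qf A 0 = 0.
Proof. by rewrite /qf mulmx0 mxtrace0. Qed.
Lemma pd_psd n (A : 'M[cplx]_n) : pd A -> psd A.
Proof.
case=> h p; split=> // x; case: (eqVneq x 0) => [->|nz]; first by rewrite qf0.
exact/ltW/p.
Qed.
Lemma qfD n (A B : 'M[cplx]_n) x : qf (A + B) x = qf A x + qf B x.
Proof. by rewrite /qf mulmxDr mulmxDl mxtraceD raddfD. Qed.
Lemma qf_cong m n (P : 'M[cplx]_(m, n)) (A : 'M_n) x :
  qf (P *m A *m herm P) x = qf A (herm P *m x).
Proof. by rewrite /qf hermM hermK !mulmxA. Qed.
Lemma herm_cong m n (P : 'M[cplx]_(m, n)) (A : 'M_n) :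
  hermitian A -> hermitian (P *m A *m herm P).
Proof. by rewrite /hermitian !hermM hermK => ->; rewrite mulmxA. Qed.
Lemma psd_cong m n (P : 'M[cplx]_(m, n)) (A : 'M_n) : psd A -> psd (P *m A *m herm P).
Proof. by case=> h p; split; [exact: herm_cong | move=> x; rewrite qf_cong]. Qed.
Lemma herm_unit n (P : 'M[cplx]_n) : (herm P \in unitmx) = (P \in unitmx).
Proof. by rewrite !unitmxE det_herm !unitfE fmorph_eq0. Qed.
Lemma pd_cong n (P : 'M[cplx]_n) (A : 'M_n) :
  P \in unitmx -> pd A -> pd (P *m A *m herm P).
Proof.
move=> uP [h p]; split; first exact: herm_cong.
move=> x nz; rewrite qf_cong; apply: p; apply: contra nz => /eqP e.
by rewrite -[x](mulKmx (_ : herm P \in unitmx)) ?herm_unit // e mulmx0.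
Qed.
Lemma psd_gram m n (X : 'M[cplx]_(n, m)) : psd (X *m herm X).
Proof.
split; first by rewrite /hermitian hermM hermK.
move=> x; rewrite /qf.
have ->: herm x *m (X *m herm X) *m x = herm (herm X *m x) *m (herm X *m x).
  by rewrite hermM hermK !mulmxA.
exact: cre_tr_hermM_ge0.
Qed.
Lemma pd_scalar n (s : R) : 0 < s -> pd ((RtoC s)%:M : 'M[cplx]_n).
Proof.
move=> s0; split; first exact: hermR.
move=> x nz; rewrite /qf mul_mx_scalar -scalemxAl mxtraceZ creRM.
by rewrite mulr_gt0 // cre_tr_hermM_gt0.
Qed.
Lemma pd_addr n (A B : 'M[cplx]_n) : pd A -> psd B -> pd (A + B).
Proof.
case=> hA pA [hB pB]; split; first by rewrite /hermitian hermD hA hB.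
by move=> x nz; rewrite qfD ltr_pwDl // pA.
Qed.
Lemma psd_add n (A B : 'M[cplx]_n) : psd A -> psd B -> psd (A + B).
Proof.
case=> hA pA [hB pB]; split; first by rewrite /hermitian hermD hA hB.
by move=> x; rewrite qfD addr_ge0.
Qed.
Lemma psd0 n : psd (0 : 'M[cplx]_n).
Proof. by split; [exact: herm0 | move=> x; rewrite /qf mulmx0 mul0mx mxtrace0]. Qed.
Lemma psd_sum n I (r : seq I) (P : pred I) (F : I -> 'M[cplx]_n) :
  (forall i, P i -> psd (F i)) -> psd (\sum_(i <- r | P i) F i).
Proof.
move=> h; elim/big_rec: _ => [|i A Pi pA]; first exact: psd0.
exact: psd_add (h _ Pi) pA.
Qed.
Lemma tr11 (A : 'M[cplx]_1) : \tr A = A 0 0.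
Proof. by rewrite /mxtrace big_ord1. Qed.

Lemma herm_block m1 m2 n1 n2 (Aul : 'M[cplx]_(m1, n1)) (Aur : 'M_(m1, n2))
  (Adl : 'M_(m2, n1)) (Adr : 'M_(m2, n2)) :
  herm (block_mx Aul Aur Adl Adr) = block_mx (herm Aul) (herm Adl) (herm Aur) (herm Adr).
Proof. by rewrite /herm map_block_mx tr_block_mx. Qed.
Lemma herm_col m1 m2 n (A : 'M[cplx]_(m1, n)) (B : 'M_(m2, n)) :
  herm (col_mx A B) = row_mx (herm A) (herm B).
Proof. by rewrite /herm map_col_mx tr_col_mx. Qed.

Lemma one11_neq0 : (1%:M : 'M[cplx]_1) != 0.
Proof. by apply/eqP => /matrixP /(_ 0 0); rewrite !mxE /= => /eqP; rewrite oner_eq0. Qed.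

Lemma qf_block_ul n (a : cplx) (S : 'M[cplx]_n) :
  qf (block_mx a%:M 0 0 S) (col_mx 1%:M 0) = cre a.
Proof.
rewrite /qf herm_col herm1 herm0 mul_row_block mul_row_col.
rewrite ?mulmx0 ?mul0mx ?addr0 ?mul1mx ?mulmx1 tr11 mxE eqxx /=.
by rewrite mulr1n.
Qed.
Lemma qf_block_dr n (a : cplx) (S : 'M[cplx]_n) y :
  qf (block_mx a%:M 0 0 S) (col_mx (0 : 'M[cplx]_(1, 1)) y) = qf S y.
Proof.
rewrite /qf herm_col herm0 mul_row_block mul_row_col.
by rewrite ?mulmx0 ?mul0mx ?add0r ?mulmx0 ?add0r.
Qed.

Lemma LDL n (A : 'M[cplx]_(1 + n)) : pd A ->
  exists (a : cplx) (S : 'M[cplx]_n) (b : 'M[cplx]_(n, 1)) (Lm : 'M[cplx]_(1 + n)),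
  [/\ 0 < cre a, cim a = 0, pd S &
      A = Lm *m block_mx a%:M 0 0 S *m herm Lm] /\
      (\det Lm = 1 /\ \tr A = a + (\tr S + a^-1 * \tr (herm b *m b))).
Proof.
move=> pdA; have [hA pA] := pdA.
set a : cplx := ulsubmx A 0 0.
set b := dlsubmx A.
have Eul : ulsubmx A = a%:M by rewrite [LHS]mx11_scalar.
have Eur : ursubmx A = herm b.
  by rewrite -{1}hA -{1}[A]submxK herm_block block_mxKur.
have eA0 : A = block_mx a%:M (herm b) b (drsubmx A).
  by rewrite -Eul -Eur submxK.
have ha : conjc a = a.
  have := f_equal ulsubmx hA; rewrite -{1}[A]submxK herm_block block_mxKul.
  by move=> /matrixP /(_ 0 0); rewrite hermE.
have ima : cim a = 0.
  have := f_equal cim ha; rewrite cim_conj => h; rnorm; lra.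
have rea : 0 < cre a.
  have := pA (col_mx 1%:M 0); rewrite col_mx_eq0 negb_and one11_neq0 /=.
  move=> /(_ isT); rewrite /qf herm_col herm1 herm0 {1}eA0 mul_row_block mul_row_col.
  by rewrite ?mulmx0 ?mul0mx ?addr0 ?mul1mx ?mulmx1 tr11 mxE eqxx /= mulr1n.
have a0 : a != 0 by apply: contraTneq rea => ->; rewrite cre0 ltxx.
have hai : conjc a^-1 = a^-1 by rewrite fmorphV; exact: (congr1 GRing.inv ha).
set c := a^-1 *: b.
set S := drsubmx A - a^-1 *: (b *m herm b).
set D : 'M[cplx]_(1 + n) := block_mx a%:M 0 0 S.
set Lm : 'M[cplx]_(1 + n) := block_mx 1%:M 0 c 1%:M.
set Linv : 'M[cplx]_(1 + n) := block_mx 1%:M 0 (- c) 1%:M.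
have eA : A = Lm *m D *m herm Lm.
  rewrite /D herm_block !herm0 !herm1 !mulmx_block.
  rewrite ?mulmx1 ?mul1mx ?mulmx0 ?mul0mx ?addr0 ?add0r ?mulmx0 ?addr0.
  rewrite {1}eA0; congr block_mx.
  - by rewrite /c hermZ hai mul_scalar_mx scalerA divff // scale1r.
  - by rewrite /c mul_mx_scalar scalerA divff // scale1r.
  - rewrite /c mul_mx_scalar scalerA divff // scale1r hermZ hai -scalemxAr.
    by rewrite /S addrC subrK.
have eLL : Linv *m Lm = 1%:M.
  rewrite !mulmx_block !mulmx1 !mul1mx !mulmx0 !mul0mx !addr0 !add0r addNr.
  by rewrite -scalar_mx_block.
have uLinv : Linv \in unitmx by rewrite unitmxE det_lblock !det1 mulr1 unitr1.
have eD : D = Linv *m A *m herm Linv.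
  rewrite eA !mulmxA eLL mul1mx -mulmxA -hermM eLL herm1 mulmx1 //.
have pdD : pd D by rewrite eD; exact: pd_cong.
have pS : pd S.
  have [hD pD] := pdD; split.
    by have := f_equal drsubmx hD; rewrite /D herm_block !block_mxKdr.
  move=> y nz; rewrite -(qf_block_dr a); apply: pD.
  by rewrite col_mx_eq0 negb_and nz orbT.
exists a, S, b, Lm; split => //; split.
  by rewrite det_lblock !det1 mulr1.
rewrite {1}eA0 mxtrace_block tr11 mxE eqxx mulr1n; congr (_ + _).
have -> : drsubmx A = S + a^-1 *: (b *m herm b) by rewrite /S subrK.
by rewrite mxtraceD mxtraceZ mxtrace_mulC.
Qed.

Lemma RtoC0 : RtoC 0 = 0. Proof. by []. Qed.
Lemma RtoC1 : RtoC 1 = 1. Proof. by []. Qed.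
Lemma RtoCD r s : RtoC (r + s) = RtoC r + RtoC s.
Proof. apply: cplx_ext => //=; rewrite /GRing.add /=; rnorm; by rewrite ?addr0. Qed.
Lemma real_RtoC x : cim x = 0 -> x = RtoC (cre x).
Proof. by move=> h; apply: cplx_ext. Qed.
Lemma RtoCV r : RtoC (r^-1) = (RtoC r)^-1.
Proof.
case: (eqVneq r 0) => [->|nz]; first by rewrite invr0 RtoC0 invr0.
have nzc : RtoC r != 0 by apply/eqP => h; move/eqP: nz; apply; exact: (f_equal cre h).
apply: (mulfI nzc); rewrite -RtoCM RmultE (mulfV nz) (mulfV nzc) //.
Qed.
Lemma cim_realM x y : cim x = 0 -> cim y = 0 -> cim (x * y) = 0.
Proof. by move=> hx hy; rewrite cimM hx hy !mulr0 mul0r addr0. Qed.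
Lemma cre_realM x y : cim x = 0 -> cim y = 0 -> cre (x * y) = cre x * cre y.
Proof. by move=> hx hy; rewrite creM hx hy mulr0 subr0. Qed.

Lemma det_pd n (A : 'M[cplx]_n) : pd A -> cim (\det A) = 0 /\ 0 < cre (\det A).
Proof.
elim: n A => [|n IH] A pA; first by rewrite det_mx00 cim1 cre1 ltr01.
have [a [S [b [Lm [[ra ia pS eA] [dL _]]]]]] := LDL (n:=n) pA.
have [iS rS] := IH S pS.
rewrite eA !det_mulmx det_herm dL rmorph1 mul1r mulr1 (@det_ublock _ 1 n) det_scalar1.
by rewrite cim_realM // cre_realM // mulr_gt0.
Qed.

Lemma trlog_pd n (A : 'M[cplx]_n) : pd A -> n%:R + ln (cre (\det A)) <= cre (\tr A).
Proof.
elim: n A => [|n IH] A pA.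
  by rewrite det_mx00 cre1 ln_1 /mxtrace big_ord0 addr0.
have [a [S [b [Lm [[ra ia pS eA] [dL tA]]]]]] := LDL (n:=n) pA.
have [iS rS] := det_pd pS.
have IHS := IH S pS.
have dA : \det A = a * \det S.
  by rewrite eA !det_mulmx det_herm dL rmorph1 mul1r mulr1 (@det_ublock _ 1 n) det_scalar1.
rewrite dA cre_realM // lnM // tA !raddfD.
have ea := real_RtoC ia.
have t0 : 0 <= cre (a^-1 * \tr (herm b *m b)).
  rewrite ea -RtoCV creRM mulr_ge0 ?cre_tr_hermM_ge0 //.
  by rewrite invr_ge0 ltW.
have la := ln_le_sub1 ra.
rewrite -addn1 natrD; lra.
Qed.

Lemma chol_pd n (A : 'M[cplx]_n) : pd A -> exists F, F \in unitmx /\ A = F *m herm F.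
Proof.
elim: n A => [|n IH] A pA.
  by exists 1%:M; split; [exact: unitmx1 | apply/matrixP => i []].
have [a [S [b [Lm [[ra ia pS eA] [dL tA]]]]]] := LDL (n:=n) pA.
have [F' [uF' eS]] := IH S pS.
set s := Num.sqrt (cre a).
have s0 : 0 < s by rewrite sqrtr_gt0.
pose B : 'M[cplx]_(1 + n) := block_mx (RtoC s)%:M 0 0 F'.
exists (Lm *m B); split.
  rewrite unitmx_mul unitmxE dL unitr1 /= unitmxE (@det_ublock _ 1 n) det_scalar1.
  rewrite unitrM unitfE; apply/andP; split; last by rewrite -unitmxE.
  by apply: contraTneq s0 => /(f_equal cre) /= ->; rewrite ltxx.
rewrite eA hermM !mulmxA; congr (_ *m _); rewrite -!mulmxA; congr (_ *m _).
rewrite /B (@herm_block 1 n 1 n) !herm0 hermR (@mulmx_block _ 1 n 1 n 1 n) !mulmx0 !mul0mx !addr0 !add0r.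
by rewrite -scalar_mxM -RtoCM RmultE -expr2 sqr_sqrtr ?ltW // -real_RtoC // eS.
Qed.

Lemma pd_unit n (A : 'M[cplx]_n) : pd A -> A \in unitmx.
Proof.
move=> /det_pd [_ h]; rewrite unitmxE unitfE.
by apply: contraTneq h => ->; rewrite cre0 ltxx.
Qed.
Lemma invmxM n (A B : 'M[cplx]_n) : A \in unitmx -> B \in unitmx ->
  invmx (A *m B) = invmx B *m invmx A.
Proof.
move=> uA uB.
have h : (A *m B) *m (invmx B *m invmx A) = 1%:M.
  by rewrite mulmxA -(mulmxA A) mulmxV // mulmx1 mulmxV.
by rewrite -[LHS]mulmx1 -h mulmxA mulVmx ?unitmx_mul ?uA ?uB // mul1mx.
Qed.
Lemma herm_invmx n (A : 'M[cplx]_n) : hermitian A -> hermitian (invmx A).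
Proof. by rewrite /hermitian herm_inv => ->. Qed.
Lemma pd_inv n (A : 'M[cplx]_n) : pd A -> pd (invmx A).
Proof.
move=> pA; have uA := pd_unit pA.
have -> : invmx A = invmx A *m A *m herm (invmx A).
  by rewrite herm_invmx ?mulVmx // ?mul1mx //; case: pA.
by apply: pd_cong => //; rewrite unitmx_inv.
Qed.
Lemma tr_psd n (P : 'M[cplx]_n) : psd P -> 0 <= cre (\tr P).
Proof.
case=> _ hP; rewrite /mxtrace raddf_sum; apply: sumr_ge0 => i _.
have := hP (delta_mx i 0); rewrite /qf herm_delta -rowE -colE tr11 !mxE.
done.
Qed.
Lemma tr_pd_psd n (W B : 'M[cplx]_n) : pd W -> psd B -> 0 <= cre (\tr (W *m B)).
Proof.
move=> /chol_pd [F [uF ->]] pB.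
rewrite -mulmxA mxtrace_mulC.
have := psd_cong (herm F) pB; rewrite hermK => h.
exact: tr_psd.
Qed.

Lemma logdet_ineq n (Q E : 'M[cplx]_n) : pd Q -> pd E ->
  ln (cre (\det E)) <= cre (\tr (invmx Q *m E)) + ln (cre (\det Q)) - n%:R.
Proof.
move=> pQ pE; have [F [uF eQ]] := chol_pd pQ.
set P := invmx F *m E *m herm (invmx F).
have pP : pd P by apply: pd_cong => //; rewrite unitmx_inv.
have tP : \tr P = \tr (invmx Q *m E).
  by rewrite /P mxtrace_mulC mulmxA eQ invmxM ?herm_unit // herm_inv.
have dE : \det E = \det P * \det Q.
  rewrite /P eQ herm_inv !det_mulmx !det_inv !det_herm.
  have nF : \det F != 0 by rewrite -unitfE -unitmxE.
  field; by rewrite fmorph_eq0 nF.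
have [iP rP] := det_pd pP; have [iQ rQ] := det_pd pQ.
have := trlog_pd pP; rewrite dE cre_realM // lnM // tP => h.
lra.
Qed.

Definition dbl (f : R -> R) (x : R) := exists l, derivable_pt_lim f x l.

Lemma dbl_ext f g x : (forall t, f t = g t) -> dbl f x -> dbl g x.
Proof. by move=> e [l h]; exists l; apply: derivable_pt_lim_ext h. Qed.
Lemma dbl_const c x : dbl (fun _ => c) x.
Proof. by exists R0; apply: derivable_pt_lim_const. Qed.
Lemma dbl_id x : dbl (fun t => t) x.
Proof. by exists R1; apply: derivable_pt_lim_id. Qed.
Lemma dbl_plus f g x : dbl f x -> dbl g x -> dbl (fun t => f t + g t) x.
Proof.
move=> [l1 h1] [l2 h2]; exists (Rplus l1 l2).
exact: (derivable_pt_lim_plus f g x l1 l2 h1 h2).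
Qed.
Lemma dbl_mult f g x : dbl f x -> dbl g x -> dbl (fun t => f t * g t) x.
Proof.
move=> [l1 h1] [l2 h2]; eexists.
exact: (derivable_pt_lim_mult f g x l1 l2 h1 h2).
Qed.
Lemma dbl_opp f x : dbl f x -> dbl (fun t => - f t) x.
Proof.
move=> [l h]; eexists; exact: (derivable_pt_lim_opp f x l h).
Qed.
Lemma dbl_ln f x : dbl f x -> 0 < f x -> dbl (fun t => ln (f t)) x.
Proof.
move=> [l h] /RltP hx; eexists.
exact: (derivable_pt_lim_comp f ln x l _ h (derivable_pt_lim_ln _ hx)).
Qed.

Lemma dbl_poly (p : {poly cplx}) x :
  dbl (fun t => cre p.[RtoC t]) x /\ dbl (fun t => cim p.[RtoC t]) x.
Proof.
elim/poly_ind: p => [|q c [IH1 IH2]].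
  by split; apply: (dbl_ext (f := fun _ => 0)) => [t|]; rewrite ?horner0 //; apply: dbl_const.
split.
  apply: (dbl_ext (f := fun t => cre q.[RtoC t] * t + cre c)).
    by move=> t; rewrite hornerMXaddC /=; rnorm; ring.
  by apply: dbl_plus; [apply: dbl_mult => //; exact: dbl_id | exact: dbl_const].
apply: (dbl_ext (f := fun t => cim q.[RtoC t] * t + cim c)).
  by move=> t; rewrite hornerMXaddC /=; rnorm; ring.
by apply: dbl_plus; [apply: dbl_mult => //; exact: dbl_id | exact: dbl_const].
Qed.

Lemma dbl_det n (M0 M1 M2 : 'M[cplx]_n) x :
  dbl (fun t => cre (\det (M0 + RtoC t *: M1 + RtoC (t * t) *: M2))) x.
Proof.
pose P : 'M[{poly cplx}]_n := \matrix_(i, j) ((M0 i j)%:P + (M1 i j)%:P * 'X + (M2 i j)%:P * 'X^2).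
apply: (dbl_ext (f := fun t => cre (\det P).[RtoC t])); last by case: (dbl_poly (\det P) x).
move=> t; congr cre.
have -> : (\det P).[RtoC t] = horner_eval (RtoC t) (\det P) by [].
rewrite -det_map_mx; congr determinant.
apply/matrixP => i j; rewrite !mxE.
rewrite -[LHS]/(((M0 i j)%:P + (M1 i j)%:P * 'X + (M2 i j)%:P * 'X^2).[RtoC t]) !hornerE.
rewrite RtoCM; move: (M0 i j) (M1 i j) (M2 i j) (RtoC t) => a b c y /=.
ring.
Qed.

Lemma quad_deriv (a b c : R) : derivable_pt_lim (fun t => a * (t * t) + b * t + c) 0 b.
Proof.
have h := derivable_pt_lim_plus _ _ 0 _ _
  (derivable_pt_lim_plus _ _ 0 _ _
     (derivable_pt_lim_scal _ a 0 _ (derivable_pt_lim_mult _ _ 0 _ _ (derivable_pt_lim_id 0) (derivable_pt_lim_id 0)))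
     (derivable_pt_lim_scal _ b 0 _ (derivable_pt_lim_id 0)))
  (derivable_pt_lim_const c 0).
have e : b = (a * (R1 * id 0 + id 0 * R1) + b * R1 + R0)%R.
  rewrite /id; rnorm; ring.
rewrite {2}e; apply: derivable_pt_lim_ext h => t.
by rewrite /plus_fct /mult_real_fct /mult_fct /id.
Qed.

Lemma tangent (a b c : R) (psi : R -> R) :
  (forall t, psi t <= a * (t * t) + b * t + c) -> psi 0 = c -> dbl psi 0 ->
  derivable_pt_lim psi 0 b.
Proof.
move=> hle h0 [l hl].
suff -> : b = l by [].
pose f := fun t => a * (t * t) + b * t + c - psi t.
have hf : derivable_pt_lim f 0 (b - l).
  have := derivable_pt_lim_minus _ _ 0 _ _ (quad_deriv a b c) hl.
  by apply: derivable_pt_lim_ext => t.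
pose pr := exist (fun l => derivable_pt_lim f 0 l) (b - l) hf.
have := deriv_minimum f (-1) 1 0 pr.
rewrite (derive_pt_eq_0 f 0 (b - l) pr hf).
have hm : forall x : R, Rlt (-1) x -> Rlt x 1 -> Rle (f 0) (f x).
  move=> y _ _; apply/RleP; rewrite /f /= h0.
  have hy := hle y.
  rewrite !mulr0 addr0 add0r subrr subr_ge0; exact: hy.
have r1 : Rlt (-1) 0 by apply/RltP; rewrite oppr_lt0 ltr01.
have r2 : Rlt 0 1 by apply/RltP; rewrite ltr01.
move=> /(_ r1 r2 hm) e.
have := e; rnorm => e'; lra.
Qed.

Section Model.
Variables (G K N M : nat) (gk : 'I_K -> 'I_G) (H : 'I_K -> 'M[cplx]_(N, M)) (sigma2 : 'I_K -> R).
Hypothesis hsigma : forall k, Rlt R0 (sigma2 k).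
Variable k : 'I_K.
Local Notation Hk := (H k).
Local Notation sg := (sigma2 k).
Local Notation prec := ('I_G -> 'M[cplx]_(M, N)).

Lemma sg_gt0 : 0 < sg. Proof. by apply/RltP; exact: hsigma. Qed.

Definition Tg (V : prec) g := Hk *m V g *m herm (V g) *m herm Hk.
Definition Smat (V : prec) := \sum_(g < G) Tg V g + (RtoC sg)%:M.
Definition Sjmat (V : prec) := \sum_(g < G | g != gk k) Tg V g + (RtoC sg)%:M.
Definition Ymat (V : prec) := Hk *m V (gk k).
Definition Um (V : prec) := invmx (Smat V) *m Ymat V.
Definition Em (V : prec) := 1%:M - herm (Ymat V) *m invmx (Smat V) *m Ymat V.

Lemma JmatE V : Jmat gk H sigma2 k V = invmx (Sjmat V).
Proof. by []. Qed.

Lemma TgE V g : Tg V g = (Hk *m V g) *m herm (Hk *m V g).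
Proof. by rewrite /Tg hermM !mulmxA. Qed.

Lemma S_split V : Smat V = Sjmat V + Ymat V *m herm (Ymat V).
Proof.
rewrite /Smat /Sjmat (bigD1 (gk k)) //= TgE -/(Ymat V).
by rewrite addrC -!addrA [_ + Ymat V *m _]addrC.
Qed.

Lemma psd_Tg V g : psd (Tg V g). Proof. rewrite TgE; exact: psd_gram. Qed.

Lemma pd_Sj V : pd (Sjmat V).
Proof.
rewrite /Sjmat addrC; apply: pd_addr; first exact: pd_scalar sg_gt0.
by apply: psd_sum => g _; exact: psd_Tg.
Qed.
Lemma pd_S V : pd (Smat V).
Proof.
rewrite /Smat addrC; apply: pd_addr; first exact: pd_scalar sg_gt0.
by apply: psd_sum => g _; exact: psd_Tg.
Qed.
Lemma herm_S V : herm (Smat V) = Smat V. Proof. by case: (pd_S V). Qed.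
Lemma unit_S V : Smat V \in unitmx. Proof. exact: pd_unit (pd_S V). Qed.
Lemma unit_Sj V : Sjmat V \in unitmx. Proof. exact: pd_unit (pd_Sj V). Qed.
Lemma herm_invS V : herm (invmx (Smat V)) = invmx (Smat V).
Proof. by rewrite herm_inv herm_S. Qed.

Lemma S_Um V : Smat V *m Um V = Ymat V.
Proof. by rewrite /Um mulKVmx // unit_S. Qed.
Lemma Um_S V : herm (Um V) *m Smat V = herm (Ymat V).
Proof. by rewrite -{1}herm_S -hermM S_Um. Qed.
Lemma herm_Um V : herm (Um V) = herm (Ymat V) *m invmx (Smat V).
Proof. by rewrite /Um hermM herm_invS. Qed.

Lemma Em_fact V : Em V = (1%:M - herm (Um V) *m Ymat V) *m herm (1%:M - herm (Um V) *m Ymat V)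
   + herm (Um V) *m Sjmat V *m Um V.
Proof.
have eSj : Sjmat V = Smat V - Ymat V *m herm (Ymat V) by rewrite S_split addrK.
set Z := herm (Ymat V) *m invmx (Smat V) *m Ymat V.
have hZ1 : herm (Um V) *m Ymat V = Z by rewrite herm_Um.
have hZ2 : herm (Ymat V) *m Um V = Z by rewrite /Um mulmxA.
have hZ3 : herm (Um V) *m Smat V *m Um V = Z by rewrite Um_S hZ2.
rewrite /Em -/Z eSj hermB herm1 hermM hermK hZ1 hZ2.
rewrite (mulmxBr (herm (Um V))) (mulmxBl (herm (Um V) *m Smat V)) hZ3 (mulmxA (herm (Um V))) hZ1 -(mulmxA Z) hZ2.
rewrite !(mulmxBl, mulmxBr, mul1mx, mulmx1).
move: (Z *m Z) => W2.
apply/matrixP => i j; rewrite !mxE; ring.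
Qed.


Lemma pd_Em V : pd (Em V).
Proof.
set P := 1%:M - herm (Um V) *m Ymat V.
have e := Em_fact V; rewrite -/P in e.
have p1 : psd (P *m herm P) by exact: psd_gram.
have p2 : psd (herm (Um V) *m Sjmat V *m Um V).
  have h := psd_cong (herm (Um V)) (pd_psd (pd_Sj V)); rewrite hermK in h; exact: h.
rewrite e; split; first by case: (psd_add p1 p2).
move=> x nz; rewrite qfD.
have eP : herm P *m x = x - herm (Ymat V) *m (Um V *m x).
  by rewrite /P hermB herm1 hermM hermK mulmxBl mul1mx (mulmxA (herm (Ymat V)) (Um V) x).
have q1 : qf (P *m herm P) x = cre (\tr (herm (herm P *m x) *m (herm P *m x))).
  by rewrite /qf hermM hermK !mulmxA.
have q2 : qf (herm (Um V) *m Sjmat V *m Um V) x = qf (Sjmat V) (Um V *m x).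
  by rewrite -{2}[Um V]hermK qf_cong hermK.
rewrite q2; case: (eqVneq (Um V *m x) 0) => [h0|hn].
  rewrite h0 qf0 addr0 q1 eP h0 mulmx0 subr0; exact: cre_tr_hermM_gt0.
rewrite ltr_wpDl ?cre_tr_hermM_ge0 // -?q1; first by case: p1 => _ /(_ x).
by case: (pd_Sj V) => _ /(_ _ hn).
Qed.

Lemma detEm V : \det (Em V) * \det (Smat V) = \det (Sjmat V).
Proof.
set S := Smat V; set Sj := Sjmat V; set Y := Ymat V.
have uS : S \in unitmx by exact: unit_S.
pose M1 : 'M[cplx]_(N + N) := block_mx 1%:M 0 (herm Y *m invmx S) 1%:M.
pose M2 : 'M[cplx]_(N + N) := block_mx S Y 0 (Em V).
pose M3 : 'M[cplx]_(N + N) := block_mx 1%:M Y 0 1%:M.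
pose M4 : 'M[cplx]_(N + N) := block_mx Sj 0 (herm Y) 1%:M.
have e : M1 *m M2 = M3 *m M4.
  rewrite !mulmx_block ?mul1mx ?mulmx1 ?mul0mx ?mulmx0 ?addr0 ?add0r.
  rewrite mulmxKV // /Em -/S -/Y /S S_split -/Sj -/Y.
  by congr block_mx; rewrite addrC subrK.
have := f_equal determinant e.
rewrite !det_mulmx det_lblock det_ublock det_ublock det_lblock !det1 !mul1r !mulr1.
by move=> h; rewrite mulrC h.
Qed.

Lemma Em_real V : cim (\det (Em V)) = 0 /\ 0 < cre (\det (Em V)).
Proof. exact: det_pd (pd_Em V). Qed.

Lemma negrateE V : negrate gk H sigma2 k V = ln (cre (\det (Em V))).
Proof.
have uSj := unit_Sj V; have uS := unit_S V.
have eM : 1%:M + Hk *m V (gk k) *m herm (V (gk k)) *m herm Hk *m Jmat gk H sigma2 k V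
   = Smat V *m invmx (Sjmat V).
  rewrite JmatE S_split mulmxDl mulmxV //.
  by rewrite /Ymat hermM !mulmxA.
rewrite /negrate eM det_mulmx det_inv -detEm.
have nS : \det (Smat V) != 0 by rewrite -unitfE -unitmxE.
have [iE rE] := Em_real V.
have nE : \det (Em V) != 0 by apply: contraTneq rE => ->; rewrite cre0 ltxx.
have -> : \det (Smat V) * (\det (Em V) * \det (Smat V))^-1 = (\det (Em V))^-1.
  by field; rewrite nS nE.
rewrite {1}(real_RtoC iE) -RtoCV creR lnV //; rnorm; by rewrite opprK.
Qed.

Lemma UhatE Vi : Uhat gk H sigma2 k Vi = Um Vi.
Proof. by rewrite /Uhat /Um /Ymat mulmxA. Qed.
Lemma QhatE Vi : Qhat gk H sigma2 k Vi = Em Vi.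
Proof. by rewrite /Qhat UhatE -mulmxA -/(Ymat Vi) herm_Um. Qed.

Definition Eform (U : 'M[cplx]_N) V :=
  1%:M - herm U *m Ymat V - herm (Ymat V) *m U + herm U *m Smat V *m U.

Lemma E_decomp U V : Eform U V = Em V + herm (U - Um V) *m Smat V *m (U - Um V).
Proof.
have hZ2 : herm (Ymat V) *m Um V = herm (Ymat V) *m invmx (Smat V) *m Ymat V.
  by rewrite /Um mulmxA.
rewrite hermB (mulmxBl (herm U)) Um_S mulmxBr !mulmxBl.
rewrite -(mulmxA (herm U) (Smat V) (Um V)) S_Um hZ2.
rewrite /Eform /Em.
move: (herm U *m Ymat V) (herm (Ymat V) *m U) (herm U *m Smat V *m U)
  (herm (Ymat V) *m invmx (Smat V) *m Ymat V) => a b c d.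
apply/matrixP => i j; rewrite !mxE; ring.
Qed.

Section AtVi.
Variable Vi : prec.
Local Notation Uh := (Um Vi).
Local Notation W := (invmx (Em Vi)).

Lemma herm_W : herm W = W.
Proof. by rewrite herm_inv; case: (pd_Em Vi) => ->. Qed.

Lemma AhatE : Ahat gk H sigma2 k Vi = herm Hk *m Uh *m W *m herm Uh *m Hk.
Proof. by rewrite /Ahat UhatE QhatE. Qed.
Lemma BhatE : Bhat gk H sigma2 k Vi = - (W *m herm Uh *m Hk).
Proof. by rewrite /Bhat UhatE QhatE. Qed.

Lemma trE_expand V : \tr (W *m Eform Uh V) =
  \tr W - \tr (W *m herm Uh *m Ymat V) - \tr (W *m herm (Ymat V) *m Uh)
  + \sum_(g < G) \tr (W *m herm Uh *m Tg V g *m Uh)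
  + RtoC sg * \tr (W *m herm Uh *m Uh).
Proof.
rewrite /Eform /Smat (mulmxDr (herm Uh)) mulmxDl mulmx_sumr mulmx_suml mul_mx_scalar -scalemxAl.
rewrite mulmxDr mulmxBr mulmxBr mulmx1 mulmxDr mulmx_sumr -scalemxAr.
rewrite !(mxtraceD, raddfB) raddf_sum mxtraceZ /= !mulmxA !raddfN /= addrA.
by congr (_ + _ + _); apply: eq_bigr => g _; rewrite !mulmxA.
Qed.

Lemma tr_term V g : \tr (herm (V g) *m (herm Hk *m Uh *m W *m herm Uh *m Hk) *m V g)
  = \tr (W *m herm Uh *m Tg V g *m Uh).
Proof.
have := mxtrace_mulC (herm (V g) *m herm Hk *m Uh) (W *m herm Uh *m Hk *m V g).
by rewrite /Tg !mulmxA => ->.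
Qed.

Lemma cre_cross V : cre (\tr (W *m herm (Ymat V) *m Uh)) = cre (\tr (W *m herm Uh *m Ymat V)).
Proof.
rewrite -mulmxA mxtrace_mulC.
have -> : herm (Ymat V) *m Uh *m W = herm (W *m herm Uh *m Ymat V).
  by rewrite (hermM (W *m herm Uh) (Ymat V)) (hermM W (herm Uh)) hermK herm_W
    (mulmxA (herm (Ymat V)) Uh W).
by rewrite tr_herm cre_conj.
Qed.

Lemma hsurE V : hsur gk H sigma2 k Vi V =
  cre (\tr (W *m Eform Uh V)) + ln (cre (\det (Em Vi))) - N%:R.
Proof.
rewrite /hsur /bhat AhatE BhatE UhatE QhatE; rnorm; rewrite ?INRE.
rewrite trE_expand.
rewrite (eq_bigr (fun g => \tr (W *m herm Uh *m Tg V g *m Uh))); last by move=> g _; exact: tr_term.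
rewrite mulNmx raddfN /= -(mulmxA _ Hk) -/(Ymat V).
rewrite mulmxDr mulmx1 mxtraceD -scalemxAr mxtraceZ.
rewrite (raddfD cre) cre_cross (mulmxA W) /=; rnorm.
lra.
Qed.

Lemma pd_W : pd W. Proof. exact: pd_inv (pd_Em Vi). Qed.

Lemma hsur_ge V : negrate gk H sigma2 k V <= hsur gk H sigma2 k Vi V.
Proof.
rewrite hsurE negrateE E_decomp mulmxDr mxtraceD raddfD.
have h1 := logdet_ineq (pd_Em Vi) (pd_Em V).
have h2 : 0 <= cre (\tr (W *m (herm (Uh - Um V) *m Smat V *m (Uh - Um V)))).
  apply: tr_pd_psd; first exact: pd_W.
  have h := psd_cong (herm (Uh - Um V)) (pd_psd (pd_S V)); rewrite hermK in h; exact: h.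
lra.
Qed.

Lemma cre_natr n : cre (n%:R) = n%:R.
Proof. by rewrite raddfMn. Qed.

Lemma hsur_eq : hsur gk H sigma2 k Vi Vi = negrate gk H sigma2 k Vi.
Proof.
rewrite hsurE negrateE E_decomp subrr herm0 mulmx0 addr0 mulVmx; last exact: pd_unit (pd_Em Vi).
by rewrite mxtrace1 cre_natr addrC addKr.
Qed.

Lemma psd_A : psd (Ahat gk H sigma2 k Vi).
Proof.
rewrite AhatE.
have h := psd_cong (herm Hk *m Uh) (pd_psd pd_W).
by rewrite (hermM (herm Hk) Uh) hermK (mulmxA (herm Hk *m Uh *m W) (herm Uh) Hk) in h.
Qed.

Lemma quad_mx (A : 'M[cplx]_M) (X D : 'M[cplx]_(M, N)) (c : cplx) : conjc c = c ->
  herm (X + c *: D) *m A *m (X + c *: D) = herm X *m A *m X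
   + c *: (herm D *m A *m X + herm X *m A *m D) + (c * c) *: (herm D *m A *m D).
Proof.
move=> hc; rewrite hermD hermZ hc !mulmxDl !mulmxDr -!scalemxAl -!scalemxAr !scalerA.
move: (herm X *m A *m X) (herm D *m A *m X) (herm X *m A *m D) (herm D *m A *m D) => a b e f.
by apply/matrixP => i j; rewrite !mxE; ring.
Qed.

Lemma hsur_quad V D : exists alpha beta gamma : R, 0 <= alpha /\ forall t : R,
  hsur gk H sigma2 k Vi (prec_add V (prec_scale t D)) = alpha * (t * t) + beta * t + gamma.
Proof.
set A := Ahat gk H sigma2 k Vi; set B := Bhat gk H sigma2 k Vi.
set q0 := \sum_(g < G) \tr (herm (V g) *m A *m V g).
set q1 := \sum_(g < G) (\tr (herm (D g) *m A *m V g) + \tr (herm (V g) *m A *m D g)).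
set q2 := \sum_(g < G) \tr (herm (D g) *m A *m D g).
exists (cre q2), (cre q1 + 2 * cre (\tr (B *m D (gk k)))), (hsur gk H sigma2 k Vi V).
split.
  rewrite /q2 raddf_sum; apply: sumr_ge0 => g _; apply: tr_psd.
  have h := psd_cong (herm (D g)) psd_A; rewrite hermK in h; exact: h.
move=> t; rewrite /hsur /prec_add /prec_scale -/A -/B.
have e1 : \sum_(g < G) \tr (herm (V g + RtoC t *: D g) *m A *m (V g + RtoC t *: D g))
   = q0 + RtoC t * q1 + RtoC (t * t) * q2.
  rewrite (eq_bigr (fun g => \tr (herm (V g) *m A *m V g) + RtoC t * (\tr (herm (D g) *m A *m V g) + \tr (herm (V g) *m A *m D g)) + RtoC (t * t) * \tr (herm (D g) *m A *m D g))).
    by rewrite !big_split /= -!mulr_sumr.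
  move=> g _; rewrite quad_mx ?conjR // !mxtraceD !mxtraceZ -RtoCM.
  by rewrite mxtraceD.
rewrite e1 mulmxDr mxtraceD -scalemxAr mxtraceZ !raddfD /=; rnorm.
lra.
Qed.

Lemma hsur_convex (V W : prec) (t : R) : 0 <= t -> t <= 1 ->
  hsur gk H sigma2 k Vi (prec_add (prec_scale t V) (prec_scale (1 - t) W))
  <= t * hsur gk H sigma2 k Vi V + (1 - t) * hsur gk H sigma2 k Vi W.
Proof.
move=> t0 t1.
pose D : prec := fun g => V g - W g.
have [a [b [c [a0 hq]]]] := hsur_quad W D.
have e1 : prec_add (prec_scale t V) (prec_scale (1 - t) W) = prec_add W (prec_scale t D).
  apply: functional_extensionality => g; rewrite /prec_add /prec_scale /D.
  apply/matrixP => i j; rewrite !mxE; apply: cplx_ext => /=; rnorm; ring.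
have e2 : prec_add W (prec_scale 1 D) = V.
  apply: functional_extensionality => g; rewrite /prec_add /prec_scale /D.
  by rewrite RtoC1 scale1r addrC subrK.
have e3 : prec_add W (prec_scale 0 D) = W.
  apply: functional_extensionality => g; rewrite /prec_add /prec_scale /D.
  by rewrite RtoC0 scale0r addr0.
have hV := hq 1; rewrite e2 in hV.
have hW := hq 0; rewrite e3 in hW.
have h3 : 0 <= a * t * (1 - t) by rewrite !mulr_ge0 // subr_ge0.
rewrite e1 hq hV hW; nra.
Qed.


End AtVi.

Definition T1 (V D : prec) g := Hk *m (V g *m herm (D g) + D g *m herm (V g)) *m herm Hk.

Lemma Tg_line V D t g : Tg (prec_add V (prec_scale t D)) g =
  Tg V g + RtoC t *: T1 V D g + RtoC (t * t) *: Tg D g.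
Proof.
rewrite /Tg /T1 /prec_add /prec_scale hermD hermZ conjR.
rewrite !(mulmxDr, mulmxDl, =^~ scalemxAl, =^~ scalemxAr) !mulmxA !scalerA -RtoCM.
move: (Hk *m V g *m herm (V g) *m herm Hk) (Hk *m D g *m herm (V g) *m herm Hk)
  (Hk *m V g *m herm (D g) *m herm Hk) (Hk *m D g *m herm (D g) *m herm Hk) => a b c e.
by apply/matrixP => i j; rewrite !mxE; ring.
Qed.

Lemma sum_line (P : pred 'I_G) V D t :
  \sum_(g < G | P g) Tg (prec_add V (prec_scale t D)) g =
  \sum_(g < G | P g) Tg V g + RtoC t *: \sum_(g < G | P g) T1 V D g
   + RtoC (t * t) *: \sum_(g < G | P g) Tg D g.
Proof.
rewrite (eq_bigr _ (fun g _ => Tg_line V D t g)) !big_split /=.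
by rewrite !scaler_sumr.
Qed.

Lemma S_line V D t : Smat (prec_add V (prec_scale t D)) =
  Smat V + RtoC t *: \sum_(g < G) T1 V D g + RtoC (t * t) *: \sum_(g < G) Tg D g.
Proof.
rewrite /Smat (sum_line xpredT).
move: (\sum_(g < G) _) (\sum_(g < G) _) (\sum_(g < G) _) => a b c.
by apply/matrixP => i j; rewrite !mxE; ring.
Qed.

Lemma Sj_line V D t : Sjmat (prec_add V (prec_scale t D)) =
  Sjmat V + RtoC t *: \sum_(g < G | g != gk k) T1 V D g
   + RtoC (t * t) *: \sum_(g < G | g != gk k) Tg D g.
Proof.
rewrite /Sjmat (sum_line (fun g => g != gk k)).
move: (\sum_(g < G | _) _) (\sum_(g < G | _) _) (\sum_(g < G | _) _) => a b c.
by apply/matrixP => i j; rewrite !mxE; ring.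
Qed.

Lemma negrate_split V : negrate gk H sigma2 k V = ln (cre (\det (Sjmat V))) - ln (cre (\det (Smat V))).
Proof.
rewrite negrateE -detEm.
have [iE rE] := Em_real V; have [iS rS] := det_pd (pd_S V).
by rewrite cre_realM // lnM // addrK.
Qed.

Lemma dbl_negrate V D x : dbl (fun t => negrate gk H sigma2 k (prec_add V (prec_scale t D))) x.
Proof.
apply: (dbl_ext (f := fun t => ln (cre (\det (Sjmat (prec_add V (prec_scale t D)))))
   + - ln (cre (\det (Smat (prec_add V (prec_scale t D))))))).
  by move=> t; rewrite negrate_split.
apply: dbl_plus; last apply: dbl_opp; apply: dbl_ln.
- apply: (dbl_ext (f := fun t => cre (\det (Sjmat V + RtoC t *: \sum_(g < G | g != gk k) T1 V D g
   + RtoC (t * t) *: \sum_(g < G | g != gk k) Tg D g)))); last exact: dbl_det.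
  by move=> t; rewrite Sj_line.
- by case: (det_pd (pd_Sj (prec_add V (prec_scale x D)))).
- apply: (dbl_ext (f := fun t => cre (\det (Smat V + RtoC t *: \sum_(g < G) T1 V D g
   + RtoC (t * t) *: \sum_(g < G) Tg D g)))); last exact: dbl_det.
  by move=> t; rewrite S_line.
- by case: (det_pd (pd_S (prec_add V (prec_scale x D)))).
Qed.
Lemma deriv_match (Vi D : prec) : exists l,
  derivable_pt_lim (fun t => hsur gk H sigma2 k Vi (prec_add Vi (prec_scale t D))) 0 l /\
  derivable_pt_lim (fun t => negrate gk H sigma2 k (prec_add Vi (prec_scale t D))) 0 l.
Proof.
have [a [b [c [a0 hq]]]] := hsur_quad Vi Vi D.
have e0 : prec_add Vi (prec_scale 0 D) = Vi.
  apply: functional_extensionality => g; rewrite /prec_add /prec_scale.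
  by rewrite RtoC0 scale0r addr0.
exists b; split.
  apply: (derivable_pt_lim_ext (fun t => a * (t * t) + b * t + c)); last exact: quad_deriv.
  by move=> t; rewrite hq.
apply: (tangent (a := a) (c := c)).
- by move=> t; rewrite -hq; exact: hsur_ge.
- have := hq 0; rewrite e0 hsur_eq => ->; rnorm; by rewrite !mulr0 !addr0 add0r.
- exact: dbl_negrate.
Qed.
End Model.

Definition dirD G M N (g : 'I_G) (a : 'I_M) (b : 'I_N) (c : cplx) : 'I_G -> 'M[cplx]_(M, N) :=
  fun g' => if g' == g then c *: delta_mx a b else 0.

Lemma perturbE G M N (Vi : 'I_G -> 'M[cplx]_(M, N)) g a b c t :
  perturb Vi g a b (RtoC t * c) = prec_add Vi (prec_scale t (dirD g a b c)).
Proof.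
apply: functional_extensionality => g'.
rewrite /perturb /prec_add /prec_scale /dirD; case: (g' == g).
  by rewrite scalerA.
by rewrite scaler0 addr0.
Qed.
Lemma perturbE1 G M N (Vi : 'I_G -> 'M[cplx]_(M, N)) g a b t :
  perturb Vi g a b (RtoC t) = prec_add Vi (prec_scale t (dirD g a b 1)).
Proof. by rewrite -perturbE mulr1. Qed.
Lemma perturbEi G M N (Vi : 'I_G -> 'M[cplx]_(M, N)) g a b t :
  perturb Vi g a b (cmul iC (RtoC t)) = prec_add Vi (prec_scale t (dirD g a b iC)).
Proof. by rewrite -perturbE mulrC. Qed.

Local Close Scope ring_scope.

Theorem mainTheorem3
  (G K N M : nat) (gk : 'I_K -> 'I_G)
  (H : 'I_K -> 'M[cplx]_(N, M)) (sigma2 : 'I_K -> R)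
  (hsigma : forall k, Rlt R0 (sigma2 k))
  (hN : (0 < N)%N) (hNM : (N < M)%N)
  (k : 'I_K) (Vi : 'I_G -> 'M[cplx]_(M, N)) :
  (* (C.a) global lower bound ... *)
  (forall V : 'I_G -> 'M[cplx]_(M, N),
      Rge (hsur gk H sigma2 k Vi V) (negrate gk H sigma2 k V))
  (* ... with equality at the current point *)
  /\ hsur gk H sigma2 k Vi Vi = negrate gk H sigma2 k Vi
  (* (C.b) equal partial derivatives w.r.t. real and imaginary parts of every entry *)
  /\ (forall (g : 'I_G) (a : 'I_M) (b : 'I_N),
        (exists l : R,
           derivable_pt_lim
             (fun t => hsur gk H sigma2 k Vi (perturb Vi g a b (RtoC t))) R0 l
        /\ derivable_pt_lim
             (fun t => negrate gk H sigma2 k (perturb Vi g a b (RtoC t))) R0 l)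
     /\ (exists l : R,
           derivable_pt_lim
             (fun t => hsur gk H sigma2 k Vi (perturb Vi g a b (cmul iC (RtoC t)))) R0 l
        /\ derivable_pt_lim
             (fun t => negrate gk H sigma2 k (perturb Vi g a b (cmul iC (RtoC t)))) R0 l))
  (* h is quadratic: along every real line it is a polynomial of degree <= 2
     with nonnegative leading coefficient *)
  /\ (forall V W : 'I_G -> 'M[cplx]_(M, N),
        exists alpha beta gamma : R, Rle R0 alpha /\
          forall t : R,
            hsur gk H sigma2 k Vi (prec_add V (prec_scale t W))
            = Rplus (Rplus (Rmult alpha (Rmult t t)) (Rmult beta t)) gamma)
  (* h is convex *)
  /\ (forall (V W : 'I_G -> 'M[cplx]_(M, N)) (t : R),
        Rle R0 t -> Rle t R1 ->
        Rle (hsur gk H sigma2 k Vi (prec_add (prec_scale t V) (prec_scale (Rminus R1 t) W)))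
            (Rplus (Rmult t (hsur gk H sigma2 k Vi V))
                   (Rmult (Rminus R1 t) (hsur gk H sigma2 k Vi W)))).
Proof.
split; [|split; [|split; [|split]]].
- move=> V; apply: Rle_ge; apply/RleP; exact: (hsur_ge gk H hsigma).
- exact: (hsur_eq gk H hsigma).
- move=> g a b; split.
  + have [l [h1 h2]] := deriv_match gk H hsigma k Vi (dirD g a b (GRing.one cplx)).
    exists l; split.
      by apply: (derivable_pt_lim_ext _ _ _ _ _ h1) => t; rewrite perturbE1.
    by apply: (derivable_pt_lim_ext _ _ _ _ _ h2) => t; rewrite perturbE1.
  + have [l [h1 h2]] := deriv_match gk H hsigma k Vi (dirD g a b iC).
    exists l; split.
      by apply: (derivable_pt_lim_ext _ _ _ _ _ h1) => t; rewrite perturbEi.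
    by apply: (derivable_pt_lim_ext _ _ _ _ _ h2) => t; rewrite perturbEi.
- move=> V W; have [a [b [c [a0 hq]]]] := hsur_quad gk H hsigma k Vi V W.
  exists a, b, c; split; first exact/RleP.
  exact: hq.
- move=> V W t /RleP t0 /RleP t1.
  apply/RleP; exact: (hsur_convex gk H hsigma).
Qed.
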